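(* Let $U=\big|\log\big(p_{\hat Y\mid A}(\hat Y\mid A)/p_{\hat Y}(\hat Y)\big)\big|$. For every $\delta\in(0,1]$, $\Pr(U>\epsilon_1)\le\delta$ where $$\epsilon_1=\frac{s^*}{\sqrt\delta}+\sup_{y\in\mathcal Y}\max\Big\{\gamma+\sum_{k=1}^d\log\Big(\frac{p_{\hat Y}(y)}{\inf_{a_k\in\mathcal A_k}p_{\hat Y\mid A_k}(y\mid a_k)}\Big),\ -\gamma+\sum_{k=1}^d\log\Big(\frac{\sup_{a_k\in\mathcal A_k}p_{\hat Y\mid A_k}(y\mid a_k)}{p_{\hat Y}(y)}\Big)\Big\},$$ with $s^*=(\sigma^{2/3}+\sigma_y^{2/3})^{3/2}$ and $\gamma=C(A)-C(A\mid\hat Y)$.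
   Context: Let $\hat Y$ take values in a finite set $\mathcal Y$ and let $A=(A_1,\dots,A_d)$ be a random vector, $A_k$ taking values in a finite set $\mathcal A_k$, $\mathcal A=\mathcal A_1\times\dots\times\mathcal A_d$; $(A,\hat Y)$ has joint law $p_{A,\hat Y}$. Write $p_V(v)=\Pr(V=v)$ and $p_{V\mid W}(v\mid w)=\Pr(V=v\mid W=w)$. Assume $p_{A,\hat Y}(a,y)>0$ for all $(a,y)\in\mathcal A\times\mathcal Y$. Define $L=\log\big(p_A(A)/\prod_{k} p_{A_k}(A_k)\big)$, $L_y=\log\big(p_{A\mid\hat Y}(A\mid\hat Y)/\prod_{k} p_{A_k\mid\hat Y}(A_k\mid\hat Y)\big)$, $C(A)=\mathbb E[L]$, $C(A\mid\hat Y)=\mathbb E[L_y]$, and $\sigma,\sigma_y$ the standard deviations of $L,L_y$. *)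

(* Defs.v *)
From HB Require Import structures.
From mathcomp Require Import all_boot all_order all_algebra.
From mathcomp Require Import all_classical all_reals all_analysis.
Set Implicit Arguments. Unset Strict Implicit. Unset Printing Implicit Defensive.
Import Order.TTheory GRing.Theory Num.Theory.
Local Open Scope ring_scope.

Section Info.
Variables (R : realType) (d : nat) (T : 'I_d -> finType) (Y : finType).
(* values of A = (A_1,...,A_d) *)
Notation AT := {dffun forall k : 'I_d, T k}.
(* joint law p_{A,Yhat}(a,y) *)
Variable p : AT -> Y -> R.

Definition is_joint_law := (forall a y, 0 <= p a y) /\ \sum_a \sum_y p a y = 1.

Definition pA (a : AT) : R := \sum_y p a y.
Definition pY (y : Y) : R := \sum_a p a y.
Definition pAk (k : 'I_d) (x : T k) : R := \sum_(a : AT | a k == x) \sum_y p a y.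
Definition pAkY (k : 'I_d) (x : T k) (y : Y) : R := \sum_(a : AT | a k == x) p a y.

Definition pY_A (y : Y) (a : AT) : R := p a y / pA a.
Definition pA_Y (a : AT) (y : Y) : R := p a y / pY y.
Definition pAk_Y (k : 'I_d) (x : T k) (y : Y) : R := pAkY x y / pY y.
Definition pY_Ak (y : Y) (k : 'I_d) (x : T k) : R := pAkY x y / pAk x.

Definition Ex (f : AT -> Y -> R) : R := \sum_a \sum_y p a y * f a y.
Definition Pr (P : AT -> Y -> bool) : R := \sum_a \sum_(y | P a y) p a y.

Definition Lrv (a : AT) (_ : Y) : R := ln (pA a / \prod_k pAk (a k)).
Definition Lyrv (a : AT) (y : Y) : R := ln (pA_Y a y / \prod_k pAk_Y (a k) y).

Definition CA : R := Ex Lrv.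
Definition CAY : R := Ex Lyrv.
Definition sigmaL : R := Num.sqrt (Ex (fun a y => (Lrv a y - CA) ^+ 2)).
Definition sigmaLy : R := Num.sqrt (Ex (fun a y => (Lyrv a y - CAY) ^+ 2)).

Definition Urv (a : AT) (y : Y) : R := `| ln (pY_A y a / pY y) |.

Definition sstar : R := (sigmaL `^ (2/3) + sigmaLy `^ (2/3)) `^ (3/2).
Definition gammaC : R := CA - CAY.

Definition eps1 (delta : R) : R :=
  sstar / Num.sqrt delta +
  sup [set Num.max
          (gammaC + \sum_k ln (pY y / inf [set pY_Ak y x | x in [set: T k]]))
          (- gammaC + \sum_k ln (sup [set pY_Ak y x | x in [set: T k]] / pY y))
       | y in [set: Y]].
End Info.

(* Main.v *)
Require Import Defs.
From HB Require Import structures.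
From mathcomp Require Import all_boot all_order all_algebra.
From mathcomp Require Import all_classical all_reals all_analysis.
From mathcomp Require Import ring lra.
Import Order.TTheory GRing.Theory Num.Theory.
Local Open Scope ring_scope.



Section Aux.
Variables (R : realType) (d : nat) (T : 'I_d -> finType) (Y : finType).
Variable p : {dffun forall k : 'I_d, T k} -> Y -> R.
Hypothesis hpos : forall a y, 0 < p a y.

Lemma Ex_ext f g : (forall a y, f a y = g a y) -> Ex p f = Ex p g.
Proof. by move=> h; apply: eq_bigr => a _; apply: eq_bigr => y _; rewrite h. Qed.

Lemma ExD f g : Ex p (fun a y => f a y + g a y) = Ex p f + Ex p g.
Proof.
rewrite /Ex -big_split /=; apply: eq_bigr => a _.
by rewrite -big_split /=; apply: eq_bigr => y _; rewrite mulrDr.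
Qed.

Lemma ExZ c f : Ex p (fun a y => c * f a y) = c * Ex p f.
Proof.
rewrite /Ex mulr_sumr; apply: eq_bigr => a _.
by rewrite mulr_sumr; apply: eq_bigr => y _; rewrite mulrCA.
Qed.

Lemma Ex_le f g : (forall a y, f a y <= g a y) -> Ex p f <= Ex p g.
Proof.
move=> h; apply: ler_sum => a _; apply: ler_sum => y _.
by rewrite ler_wpM2l // ltW.
Qed.

Lemma Ex_ge0 f : (forall a y, 0 <= f a y) -> 0 <= Ex p f.
Proof.
move=> h; apply: sumr_ge0 => a _; apply: sumr_ge0 => y _.
by rewrite mulr_ge0 // ltW.
Qed.

Lemma Ex_sq0 f : Ex p (fun a y => f a y ^+ 2) = 0 -> forall a y, f a y = 0.
Proof.
move=> h a y.
have h2 : \sum_y p a y * f a y ^+ 2 = 0.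
  apply: (psumr_eq0P _ h (i:=a)) => // a' _; apply: sumr_ge0 => y' _; by rewrite mulr_ge0 ?sqr_ge0 // ltW.
have := psumr_eq0P (fun y' _ => mulr_ge0 (ltW (hpos a y')) (sqr_ge0 (f a y'))) h2 (i:=y) isT.
move=> /eqP.
by rewrite mulf_eq0 gt_eqF //= sqrf_eq0 => /eqP.
Qed.

Lemma Pr_mono (P Q : _ -> _ -> bool) : (forall a y, P a y -> Q a y) -> Pr p P <= Pr p Q.
Proof.
move=> h; apply: ler_sum => a _; rewrite [X in X <= _]big_mkcond [X in _ <= X]big_mkcond.
apply: ler_sum => y _; case: ifP => hP; first by rewrite (h _ _ hP).
by case: ifP => _ //; exact: ltW.
Qed.

Lemma Pr_false : Pr p (fun _ _ => false) = 0.
Proof. by apply: big1 => a _; exact: big_pred0. Qed.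

Lemma cheb (f : _ -> _ -> R) (t : R) : 0 < t ->
  Pr p (fun a y => t < `|f a y|) <= Ex p (fun a y => f a y ^+ 2) / t ^+ 2.
Proof.
move=> t0.
have -> : Ex p (fun a y => f a y ^+ 2) / t ^+ 2 = Ex p (fun a y => t^-2 * f a y ^+ 2).
  by rewrite ExZ mulrC.
apply: ler_sum => a _; rewrite big_mkcond; apply: ler_sum => y _.
case: ifP => h; last first.
  by apply: mulr_ge0; [exact: ltW|apply: mulr_ge0; rewrite ?sqr_ge0 // invr_ge0 exprn_ge0 // ltW].
rewrite -[X in X <= _]mulr1; apply: ler_wpM2l; first exact: ltW.
rewrite mulrC ler_pdivlMr ?exprn_gt0 // mul1r.
rewrite -[f a y ^+ 2]real_normK ?num_real //; apply: lerXn2r; rewrite ?inE ?ltW //.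
by rewrite nnegrE ltW.
Qed.
Lemma mink (f g : _ -> _ -> R) :
  Ex p (fun a y => (g a y - f a y) ^+ 2) <=
  (Num.sqrt (Ex p (fun a y => f a y ^+ 2)) + Num.sqrt (Ex p (fun a y => g a y ^+ 2))) ^+ 2.
Proof.
have A0 : 0 <= Ex p (fun a y => f a y ^+ 2) by apply: Ex_ge0 => *; exact: sqr_ge0.
have B0 : 0 <= Ex p (fun a y => g a y ^+ 2) by apply: Ex_ge0 => *; exact: sqr_ge0.
have e : Ex p (fun a y => (g a y - f a y) ^+ 2) =
  Ex p (fun a y => f a y ^+ 2) + Ex p (fun a y => g a y ^+ 2) + (-2) * Ex p (fun a y => f a y * g a y).
  by rewrite -ExZ -!ExD; apply: Ex_ext => a y; ring.
have [a0|apos] := eqVneq (Num.sqrt (Ex p (fun a y => f a y ^+ 2))) 0.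
  have A00 : Ex p (fun a y => f a y ^+ 2) = 0.
    by apply/eqP; rewrite eq_le A0 andbT -sqrtr_eq0 a0.
  have f0 := Ex_sq0 _ A00.
  rewrite a0 add0r sqr_sqrtr //;
  by apply: Ex_le => a y; rewrite f0 subr0.
have [b0|bpos] := eqVneq (Num.sqrt (Ex p (fun a y => g a y ^+ 2))) 0.
  have B00 : Ex p (fun a y => g a y ^+ 2) = 0.
    by apply/eqP; rewrite eq_le B0 andbT -sqrtr_eq0 b0.
  have g0 := Ex_sq0 _ B00.
  rewrite b0 addr0 sqr_sqrtr //;
  by apply: Ex_le => a y; rewrite g0 sub0r sqrrN.
move: (Num.sqrt (Ex p (fun a y => f a y ^+ 2))) (sqr_sqrtr A0) (sqrtr_ge0 (Ex p (fun a y => f a y ^+ 2))) apos.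
move: (Num.sqrt (Ex p (fun a y => g a y ^+ 2))) (sqr_sqrtr B0) (sqrtr_ge0 (Ex p (fun a y => g a y ^+ 2))) bpos.
move=> b hb b0 bn a ha a0 an.
have key : Ex p (fun x y => - (2 * a * b) * (f x y * g x y)) <=
   Ex p (fun x y => b ^+ 2 * f x y ^+ 2 + a ^+ 2 * g x y ^+ 2).
  apply: Ex_le => x y.
  rewrite -subr_ge0; have -> : b ^+ 2 * f x y ^+ 2 + a ^+ 2 * g x y ^+ 2 - - (2 * a * b) * (f x y * g x y)
    = (b * f x y + a * g x y) ^+ 2 by ring.
  exact: sqr_ge0.
rewrite ExD !ExZ -ha -hb in key.
rewrite e -ha -hb.
have ap : 0 < a by rewrite lt_neqAle eq_sym an a0.
have bp : 0 < b by rewrite lt_neqAle eq_sym bn b0.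
have abp : 0 < a * b by rewrite mulr_gt0.
move: key; set E := Ex p _ => key.
nra.
Qed.
End Aux.
Arguments Ex_sq0 {R d T Y p}. Arguments Ex_ge0 {R d T Y p}. Arguments Pr_mono {R d T Y p}. Arguments cheb {R d T Y p}. Arguments mink {R d T Y p}. Arguments Ex_le {R d T Y p}.



Lemma pow32 {R : realType} (x : R) : 0 <= x -> x `^ (3/2) = x * Num.sqrt x.
Proof.
move=> x0; have -> : (3/2 : R) = 1 + 2^-1 by lra.
rewrite powRD ?powRr1 ?powR12_sqrt //.
have -> : (1 + 2^-1 == 0 :> R) = false by apply: gt_eqF; lra.
by [].
Qed.

Lemma pow23K {R : realType} (x : R) : 0 <= x -> (x `^ (2/3)) `^ (3/2) = x.
Proof.
move=> x0; rewrite -powRrM.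
have -> : (2/3 * (3/2) : R) = 1 by lra.
by rewrite powRr1.
Qed.

Lemma sstar_ge (R : realType) (s1 s2 : R) : 0 <= s1 -> 0 <= s2 ->
  s1 + s2 <= (s1 `^ (2/3) + s2 `^ (2/3)) `^ (3/2).
Proof.
move=> h1 h2.
rewrite -{1}(pow23K _ h1) -{1}(pow23K _ h2).
have u0 := powR_ge0 s1 (2/3); have v0 := powR_ge0 s2 (2/3).
move: (s1 `^ (2/3)) (s2 `^ (2/3)) u0 v0 => u v u0 v0.
rewrite !pow32 ?addr_ge0 // mulrDl.
apply: lerD; apply: ler_wpM2l => //; rewrite ler_sqrt ?addr_ge0 //.
- by rewrite lerDl.
- by rewrite lerDr.
Qed.



Section Gen.
Variable R : realType.

Lemma sup_img (I : finType) (f : I -> R) x : f x <= sup [set f i | i in [set: I]].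
Proof.
apply: ub_le_sup; last by exists x.
exists (\sum_i `|f i|) => _ [i _ <-].
apply: (le_trans (ler_norm _)).
by rewrite (bigD1 i) //= lerDl sumr_ge0.
Qed.

Lemma inf_img (I : finType) (f : I -> R) x : (forall i, 0 < f i) ->
  0 < inf [set f i | i in [set: I]] /\ inf [set f i | i in [set: I]] <= f x.
Proof.
move=> hf; split.
  have hm : 0 < \big[Order.min/1]_i f i.
    by apply: (big_ind (fun v : R => 0 < v)) => // u v hu hv; rewrite lt_min hu hv.
  apply: (lt_le_trans hm); apply: lb_le_inf; first by exists (f x), x.
  by move=> _ [i _ <-]; rewrite (bigD1 i) //= ge_min lexx.
apply: ge_inf; last by exists x.
by exists 0 => _ [i _ <-]; exact: ltW.
Qed.

Lemma ln_divr (x y : R) : 0 < x -> 0 < y -> ln (x / y) = ln x - ln y.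
Proof. by move=> hx hy; rewrite lnM ?lnV ?posrE ?invr_gt0. Qed.

Lemma ln_prod (I : finType) (F : I -> R) : (forall i, 0 < F i) ->
  ln (\prod_i F i) = \sum_i ln (F i).
Proof.
move=> hF.
suff : 0 < \prod_i F i /\ ln (\prod_i F i) = \sum_i ln (F i) by case.
apply: (big_ind2 (fun u v => 0 < u /\ ln u = v)).
- by rewrite ln1.
- by move=> u1 v1 u2 v2 [h1 <-] [h2 <-]; rewrite mulr_gt0 // lnM.
- by move=> i _; rewrite hF.
Qed.

Lemma pos_sum (I : finType) (P : pred I) (F : I -> R) i0 :
  (forall i, 0 <= F i) -> P i0 -> 0 < F i0 -> 0 < \sum_(i | P i) F i.
Proof.
move=> h0 hP hi; rewrite (bigD1 i0) //=; apply: (lt_le_trans hi).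
by rewrite lerDl sumr_ge0.
Qed.
End Gen.



Section Point.
Variables (R : realType) (d : nat) (T : 'I_d -> finType) (Y : finType).
Variable p : {dffun forall k : 'I_d, T k} -> Y -> R.
Hypothesis hpos : forall a y, 0 < p a y.

Lemma Upoint a y :
 Urv p a y <= `|(Lyrv p a y - CAY p) - (Lrv p a y - CA p)| +
  Num.max (gammaC p + \sum_k ln (pY p y / inf [set pY_Ak p y x | x in [set: T k]]))
          (- gammaC p + \sum_k ln (sup [set pY_Ak p y x | x in [set: T k]] / pY p y)).
Proof.
have hp0 : forall a y, 0 <= p a y by move=> *; exact: ltW.
have hA : 0 < pA p a by apply: (@pos_sum _ _ _ _ y).
have hY : 0 < pY p y by apply: (@pos_sum _ _ _ _ a).
have hAkY : forall k (x : T k), 0 < pAkY p x y.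
  move=> k x; pose a' : {dffun forall k : 'I_d, T k} := finfun (dfwith (fun j => a j) k x).
  by apply: (@pos_sum _ _ _ _ a'); rewrite // ffunE dfwithin.
have hAk : forall k (x : T k), 0 < pAk p x.
  move=> k x; pose a' : {dffun forall k : 'I_d, T k} := finfun (dfwith (fun j => a j) k x).
  apply: (@pos_sum _ _ _ _ a'); rewrite ?ffunE ?dfwithin //.
    by move=> i; apply: sumr_ge0.
  exact: (@pos_sum _ _ _ _ y).
have hq : forall k (x : T k), 0 < pY_Ak p y x by move=> k x; rewrite divr_gt0.
have hr : ln (pY_A p y a / pY p y) = ((Lyrv p a y - CAY p) - (Lrv p a y - CA p)) - gammaC p
     + \sum_k ln (pY_Ak p y (a k) / pY p y).
  rewrite /Lyrv /Lrv /gammaC /pY_A /pA_Y /pY_Ak /pAk_Y.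
  rewrite !ln_divr ?divr_gt0 ?prodr_gt0 //.
  rewrite !ln_prod; last 2 first.
  - by move=> k.
  - by move=> k; rewrite divr_gt0.
  under eq_bigr => k _ do rewrite !ln_divr ?divr_gt0 //.
  under [X in _ = _ + X]eq_bigr => k _ do rewrite !ln_divr ?divr_gt0 //.
  rewrite !sumrB; ring.
  by move=> k _; rewrite divr_gt0.
rewrite /Urv hr.
set W := (Lyrv p a y - CAY p) - (Lrv p a y - CA p).
set s := \sum_k ln (pY_Ak p y (a k) / pY p y).
have up : s <= \sum_k ln (sup [set pY_Ak p y x | x in [set: T k]] / pY p y).
  apply: ler_sum => k _.
  have hs := @sup_img _ _ (fun x => pY_Ak p y x) (a k).
  have hs0 : 0 < sup [set pY_Ak p y x | x in [set: T k]] by apply: lt_le_trans hs.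
  rewrite ler_ln ?posrE ?divr_gt0 //.
  by apply: ler_wpM2r => //; rewrite invr_ge0 ltW.
have lo : - s <= \sum_k ln (pY p y / inf [set pY_Ak p y x | x in [set: T k]]).
  rewrite /s -sumrN; apply: ler_sum => k _.
  have [hi0 hi] := @inf_img _ _ _ (a k) (hq k).
  rewrite [ln (pY_Ak p y (a k) / pY p y)]ln_divr // [ln (pY p y / _)]ln_divr //.
  by rewrite opprB lerD2l lerN2 ler_ln ?posrE.
set M1 := gammaC p + _. set M2 := - gammaC p + _.
have h1 : M1 <= Num.max M1 M2 by rewrite le_max lexx.
have h2 : M2 <= Num.max M1 M2 by rewrite le_max lexx orbT.
have hW1 := ler_norm W. have hW2 : - W <= `|W| by rewrite -normrN ler_norm.
rewrite ler_norml; apply/andP; split.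
  rewrite /M1 in h1; lra.
rewrite /M2 in h2; lra.
Qed.
End Point.
Arguments Upoint {R d T Y p}.



Theorem mainTheorem4 (R : realType) (d : nat) (T : 'I_d -> finType) (Y : finType)
  (p : {dffun forall k : 'I_d, T k} -> Y -> R)
  (hlaw : is_joint_law p)
  (hpos : forall a y, 0 < p a y)
  (delta : R) (hdelta0 : 0 < delta) (hdelta1 : delta <= 1) :
  Pr p (fun a y => Urv p a y > eps1 p delta) <= delta.
Proof.
pose W a y := (Lyrv p a y - CAY p) - (Lrv p a y - CA p).
have ev : Pr p (fun a y => Urv p a y > eps1 p delta) <=
          Pr p (fun a y => sstar p / Num.sqrt delta < `|W a y|).
  apply: (Pr_mono hpos) => a y; rewrite /eps1 => h.
  have hp := Upoint hpos a y.
  have hs := @sup_img _ Y (fun y0 => Num.max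
     (gammaC p + \sum_k ln (pY p y0 / inf [set pY_Ak p y0 x | x in [set: T k]]))
     (- gammaC p + \sum_k ln (sup [set pY_Ak p y0 x | x in [set: T k]] / pY p y0))) y.
  cbv beta in hs; rewrite /W; lra.
have hW2 : Ex p (fun a y => W a y ^+ 2) <= (sigmaL p + sigmaLy p) ^+ 2 :=
  mink hpos (fun a y => Lrv p a y - CA p) (fun a y => Lyrv p a y - CAY p).
have hs0 : sigmaL p + sigmaLy p <= sstar p := @sstar_ge _ _ _ (sqrtr_ge0 _) (sqrtr_ge0 _).
have hS : 0 <= sigmaL p + sigmaLy p by rewrite addr_ge0 ?sqrtr_ge0.
have hE : Ex p (fun a y => W a y ^+ 2) <= sstar p ^+ 2.
  apply: (le_trans hW2); apply: lerXn2r => //; rewrite nnegrE //; exact: le_trans hs0.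
have [sp|s0] : 0 < sstar p \/ sstar p = 0.
  have : 0 <= sstar p := powR_ge0 _ _.
  rewrite le_eqVlt => /orP [/eqP <-|]; by [right|left].
- have tp : 0 < sstar p / Num.sqrt delta by rewrite divr_gt0 ?sqrtr_gt0.
  apply: (le_trans ev); apply: (le_trans (cheb hpos _ _ tp)).
  rewrite ler_pdivrMr ?exprn_gt0 // expr_div_n sqr_sqrtr; last exact: ltW.
  rewrite mulrCA divff ?gt_eqF // mulr1.
  exact: hE.
- have E0 : Ex p (fun a y => W a y ^+ 2) = 0.
    apply/eqP; rewrite eq_le; rewrite s0 expr0n /= in hE; rewrite hE /=.
    by apply: (Ex_ge0 hpos) => *; exact: sqr_ge0.
  have W0 := Ex_sq0 hpos _ E0.
  apply: (le_trans ev); rewrite s0 mul0r.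
  apply: (le_trans (Pr_mono hpos _ (fun _ _ => false) _)).
    by move=> a y; rewrite W0 normr0 ltxx.
  by rewrite Pr_false ltW.
Qed.
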